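(* Let $\mathbf{E},\mathbf{Y}$ be Euclidean spaces, $\mathcal{X}\subset\mathbf{E}$ nonempty closed convex, $h\colon\mathbf{Y}\to\mathbb{R}$ convex, $F\colon\mathbf{E}\to\mathbf{Y}$ differentiable with Jacobian $\nabla F(x)$, and $f=h\circ F$. Let $\mathcal{X}^*=\operatorname{argmin}_{\mathcal{X}}f$ be nonempty and fix $\bar x\in\mathcal{X}^*$. Suppose for some $\epsilon,\mu,\rho>0$: (approximation) $|f(y)-f_x(y)|\le\frac\rho2\|y-x\|^2$ for all $x\in\mathcal{X}\cap B_\epsilon(\bar x)$, $y\in\mathcal{X}$, where $f_x(y):=h(F(x)+\nabla F(x)(y-x))$; (sharpness) $f(x)-\inf_{\mathcal{X}}f\ge\mu\,\mathrm{dist}(x,\mathcal{X}^* )$ for all $x\in\mathcal{X}\cap B_\epsilon(\bar x)$. Let $\beta\ge\rho$ and let $x_0\in B_{\epsilon/2}(\bar x)\cap\mathcal{X}$ satisfy $$f(x_0)-\min_{\mathcal{X}}f\le\min\Big\{\frac{\beta\epsilon^2}{25},\frac{\mu^2}{2\beta}\Big\}.$$ Consider the prox-linear iterates $x_{k+1}=\operatorname{argmin}_{x\in\mathcal{X}}\big\{h\big(F(x_k)+\nabla F(x_k)(x-x_k)\big)+\frac\beta2\|x-x_k\|^2\big\}$. Then all $x_k$ lie in $B_\epsilon(\bar x)$ and for all $k\ge0$ $$\mathrm{dist}(x_{k+1},\mathcal{X}^* )\le\frac\beta\mu\mathrm{dist}^2(x_k,\mathcal{X}^* ),\qquad f(x_{k+1})-\min_{\mathcal{X}}f\le\frac{\beta}{\mu^2}\big(f(x_k)-\min_{\mathcal{X}}f\big)^2.$$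 Moreover, the iterates converge to some $x_\infty\in\mathcal{X}^*$ with $\|x_k-x_\infty\|\le\frac{2\sqrt2\mu}{\beta}\big(\frac12\big)^{2^{k-1}}$ for all $k\ge0$.
   Context: $\|\cdot\|$ is the Euclidean norm on $\mathbf{E}$, $B_\epsilon(z)$ the closed ball of radius $\epsilon$ about $z$, and $\mathrm{dist}$ the Euclidean distance. *)

(* Defs.v *)
From mathcomp Require Import ssreflect ssrfun ssrbool eqtype ssrnat seq fintype bigop.
From Stdlib Require Import Reals ClassicalEpsilon.

Set Implicit Arguments.
Unset Strict Implicit.

Local Open Scope R_scope.

Definition vec (n : nat) := 'I_n -> R.

Definition vadd n (u v : vec n) : vec n := fun i => u i + v i.
Definition vsub n (u v : vec n) : vec n := fun i => u i - v i.
Definition vscale n (a : R) (u : vec n) : vec n := fun i => a * u i.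

Definition einner n (u v : vec n) : R := \big[Rplus/0]_(i < n) (u i * v i).
Definition enorm n (u : vec n) : R := sqrt (einner u u).

Definition mat (m n : nat) := 'I_m -> 'I_n -> R.
Definition mapply m n (A : mat m n) (v : vec n) : vec m :=
  fun i => \big[Rplus/0]_(j < n) (A i j * v j).

Definition eball n (z : vec n) (e : R) (x : vec n) : Prop := enorm (vsub x z) <= e.

Definition enonempty n (S : vec n -> Prop) : Prop := exists x, S x.
Definition eclosed_set n (S : vec n -> Prop) : Prop :=
  forall x, (forall e, 0 < e -> exists y, S y /\ enorm (vsub y x) < e) -> S x.
Definition econvex_set n (S : vec n -> Prop) : Prop :=
  forall x y t, S x -> S y -> 0 <= t <= 1 ->
    S (vadd (vscale t x) (vscale (1 - t) y)).
Definition econvex_fun m (h : vec m -> R) : Prop :=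
  forall a b t, 0 <= t <= 1 ->
    h (vadd (vscale t a) (vscale (1 - t) b)) <= t * h a + (1 - t) * h b.

Definition has_jacobian n m (F : vec n -> vec m) (J : vec n -> mat m n) : Prop :=
  forall x eps, 0 < eps -> exists delta, 0 < delta /\
    forall y, enorm (vsub y x) < delta ->
      enorm (vsub (vsub (F y) (F x)) (mapply (J x) (vsub y x))) <= eps * enorm (vsub y x).

Definition eargmin n (f : vec n -> R) (X : vec n -> Prop) (x : vec n) : Prop :=
  X x /\ forall y, X y -> f x <= f y.

(* Euclidean distance to a set: the infimum of ||x - y|| over y in S
   (chosen by epsilon; meaningful when S is enonempty) *)
Definition is_glb_dist n (S : vec n -> Prop) (x : vec n) (d : R) : Prop :=
  (forall y, S y -> d <= enorm (vsub x y)) /\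
  (forall d', (forall y, S y -> d' <= enorm (vsub x y)) -> d' <= d).
Definition edist n (S : vec n -> Prop) (x : vec n) : R :=
  epsilon (inhabits 0) (is_glb_dist S x).

Definition emodel n m (h : vec m -> R) (F : vec n -> vec m) (J : vec n -> mat m n)
  (x y : vec n) : R := h (vadd (F x) (mapply (J x) (vsub y x))).

(* Main.v *)
Require Import Defs.
From mathcomp Require Import ssreflect ssrfun ssrbool eqtype ssrnat seq fintype bigop.
From Stdlib Require Import Reals ClassicalEpsilon Lra Classical FunctionalExtensionality.
From HB Require Import structures.
Local Lemma Rplus_0_l' : left_id (0:R) Rplus. Proof. move=> x; apply: Rplus_0_l. Qed.
Local Lemma RplusA' : associative Rplus. Proof. move=> x y z; rewrite Rplus_assoc; done. Qed.
HB.instance Definition _ := Monoid.isComLaw.Build R (0:R) Rplus RplusA' Rplus_comm Rplus_0_l'.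
Local Open Scope R_scope.
Set Implicit Arguments.
Unset Strict Implicit.

Lemma bigR_recr n (F : 'I_n.+1 -> R) :
  \big[Rplus/0]_(i<n.+1) F i = \big[Rplus/0]_(i<n) F (widen_ord (leqnSn n) i) + F ord_max.
Proof. exact: big_ord_recr. Qed.
Lemma bigR0 (F : 'I_0 -> R) : \big[Rplus/0]_(i<0) F i = 0.
Proof. exact: big_ord0. Qed.

Ltac fold_big := repeat match goal with |- context [@bigop.body R ?I ?z ?e ?f] =>
  let a := fresh "a" in set a := @bigop.body R I z e f end.

Lemma big_add n (F G : 'I_n -> R) :
  \big[Rplus/0]_(i<n) (F i + G i) = \big[Rplus/0]_(i<n) F i + \big[Rplus/0]_(i<n) G i.
Proof.
elim: n F G => [|n IH] F G; first by rewrite !bigR0; fold_big; ring.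
rewrite !bigR_recr /= IH; fold_big; ring.
Qed.

Lemma big_scale n a (F : 'I_n -> R) :
  \big[Rplus/0]_(i<n) (a * F i) = a * \big[Rplus/0]_(i<n) F i.
Proof.
elim: n F => [|n IH] F; first by rewrite !bigR0; fold_big; ring.
rewrite !bigR_recr /= IH; fold_big; ring.
Qed.

Lemma big_ext n (F G : 'I_n -> R) : (forall i, F i = G i) ->
  \big[Rplus/0]_(i<n) F i = \big[Rplus/0]_(i<n) G i.
Proof. move=> H; apply: eq_bigr => i _; apply: H. Qed.

Lemma big_le n (F G : 'I_n -> R) : (forall i, F i <= G i) ->
  \big[Rplus/0]_(i<n) F i <= \big[Rplus/0]_(i<n) G i.
Proof.
elim: n F G => [|n IH] F G H; first by rewrite !bigR0; fold_big; lra.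
rewrite !bigR_recr /=. have := IH (fun i => F (widen_ord (leqnSn n) i))
  (fun i => G (widen_ord (leqnSn n) i)) (fun i => H _). have := H ord_max. fold_big; lra.
Qed.

Lemma big_ge0 n (F : 'I_n -> R) : (forall i, 0 <= F i) -> 0 <= \big[Rplus/0]_(i<n) F i.
Proof.
move=> H; have := @big_le n (fun _ => 0) F H.
have -> : \big[Rplus/0]_(i<n) (fun _ : 'I_n => 0) i = 0 * \big[Rplus/0]_(i<n) (fun _ : 'I_n => 0) i.
  by rewrite -big_scale; apply: big_ext => i; fold_big; ring.
lra.
Qed.

Lemma big_term n (F : 'I_n -> R) i0 : (forall i, 0 <= F i) -> F i0 <= \big[Rplus/0]_(i<n) F i.
Proof.
elim: n F i0 => [|n IH] F i0 H; first by case: i0.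
rewrite bigR_recr /=.
have H0 := @big_ge0 n (fun i => F (widen_ord (leqnSn n) i)) (fun i => H _).
case: (unliftP ord_max i0) => [j ->|->].
- have -> : lift ord_max j = widen_ord (leqnSn n) j by apply: val_inj; rewrite /= /bump leqNgt ltn_ord.
  have := IH (fun i => F (widen_ord (leqnSn n) i)) j (fun i => H _). have := H ord_max. move: H0. fold_big; lra.
- move: H0; fold_big; lra.
Qed.

Lemma big_const_le n (F : 'I_n -> R) b : (forall i, F i <= b) ->
  \big[Rplus/0]_(i<n) F i <= INR n * b.
Proof.
elim: n F => [|n IH] F H; first by rewrite bigR0 /=; fold_big; lra.
rewrite bigR_recr S_INR. have := IH (fun i => F (widen_ord (leqnSn n) i)) (fun i => H _).
have := H ord_max. fold_big; lra.
Qed.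

Lemma big_abs n (F : 'I_n -> R) :
  Rabs (\big[Rplus/0]_(i<n) F i) <= \big[Rplus/0]_(i<n) Rabs (F i).
Proof.
elim: n F => [|n IH] F; first by rewrite !bigR0 Rabs_R0; fold_big; lra.
rewrite !bigR_recr /=. eapply Rle_trans; first by apply Rabs_triang.
have := IH (fun i => F (widen_ord (leqnSn n) i)). fold_big; lra.
Qed.

Lemma big_zero n (F : 'I_n -> R) : (forall i, F i = 0) -> \big[Rplus/0]_(i<n) F i = 0.
Proof.
move=> H; rewrite (big_ext H).
have -> : \big[Rplus/0]_(i<n) (fun _ : 'I_n => 0) i = 0 * \big[Rplus/0]_(i<n) (fun _ : 'I_n => 0) i.
  by rewrite -big_scale; apply: big_ext => i; fold_big; ring.
ring.
Qed.

Lemma einner_ge0 n (u : vec n) : 0 <= einner u u.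
Proof. rewrite /einner; apply: big_ge0 => i; nra. Qed.

Lemma enorm_ge0 n (u : vec n) : 0 <= enorm u.
Proof. apply: sqrt_pos. Qed.

Lemma enorm_sq n (u : vec n) : enorm u ^ 2 = einner u u.
Proof. rewrite /enorm pow2_sqrt //; apply: einner_ge0. Qed.

Lemma enorm_ext n (u v : vec n) : (forall i, u i = v i) -> enorm u = enorm v.
Proof. by move=> H; have -> : u = v by apply: functional_extensionality. Qed.

Lemma coord_sq n (u : vec n) i : u i * u i <= einner u u.
Proof. rewrite /einner; apply: (@big_term n (fun i => u i * u i)) => j; nra. Qed.

Lemma coord_le n (u : vec n) i : Rabs (u i) <= enorm u.
Proof. rewrite -sqrt_Rsqr_abs; apply: sqrt_le_1_alt; exact: coord_sq. Qed.

Lemma einner_zero_l n (u v : vec n) : einner u u = 0 -> einner u v = 0.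
Proof.
move=> H; rewrite /einner; apply: big_zero => i.
have := coord_sq u i; rewrite H => Hi. have : u i = 0 by nra. move=> ->; ring.
Qed.

Lemma einner_sym n (u v : vec n) : einner u v = einner v u.
Proof. rewrite /einner; apply: big_ext => i; ring. Qed.

Lemma einner_lin n a b (u v : vec n) :
  einner (fun i => a * u i + b * v i) (fun i => a * u i + b * v i) =
  a ^ 2 * einner u u + 2 * a * b * einner u v + b ^ 2 * einner v v.
Proof.
rewrite /einner.
rewrite (@big_ext n _ (fun i => a ^ 2 * (u i * u i) + (2 * a * b * (u i * v i) + b ^ 2 * (v i * v i)))); last by move=> i; ring.
rewrite !big_add !big_scale. fold_big; ring.
Qed.

Lemma cauchy_schwarz n (u v : vec n) : einner u v <= enorm u * enorm v.
Proof.
have Hu := enorm_ge0 u; have Hv := enorm_ge0 v.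
case: (Req_dec (einner u u) 0) => H1.
  rewrite einner_zero_l //; nra.
case: (Req_dec (einner v v) 0) => H2.
  rewrite einner_sym einner_zero_l //; nra.
have Eu := enorm_sq u; have Ev := enorm_sq v.
have Pu : 0 < enorm u.
  case: Hu => // E; exfalso; apply: H1; rewrite -Eu -E; ring.
have Pv : 0 < enorm v.
  case: Hv => // E; exfalso; apply: H2; rewrite -Ev -E; ring.
have := einner_ge0 (fun i => enorm v * u i + (- enorm u) * v i).
rewrite einner_lin => H.
have Hp : 0 < enorm u * enorm v by nra.
have : enorm u * enorm v * einner u v <= enorm u * enorm v * (enorm u * enorm v) by nra.
move=> H3; apply: (Rmult_le_reg_l _ _ _ Hp); lra.
Qed.

Lemma enorm_add n (u v : vec n) : enorm (fun i => u i + v i) <= enorm u + enorm v.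
Proof.
have Hu := enorm_ge0 u; have Hv := enorm_ge0 v.
have H : einner (fun i => u i + v i) (fun i => u i + v i) <= (enorm u + enorm v) ^ 2.
  have -> : einner (fun i => u i + v i) (fun i => u i + v i) =
    einner (fun i => 1 * u i + 1 * v i) (fun i => 1 * u i + 1 * v i).
    by rewrite /einner; apply: big_ext => i; ring.
  rewrite einner_lin. have := cauchy_schwarz u v. have := enorm_sq u; have := enorm_sq v. nra.
rewrite -(sqrt_pow2 (enorm u + enorm v)); last lra.
apply: sqrt_le_1_alt; exact: H.
Qed.

Lemma enorm_scale n a (u : vec n) : enorm (fun i => a * u i) = Rabs a * enorm u.
Proof.
rewrite /enorm.
have -> : einner (fun i => a * u i) (fun i => a * u i) = a ^ 2 * einner u u.
  by rewrite /einner -big_scale; apply: big_ext => i; ring.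
rewrite sqrt_mult; [|nra|apply: einner_ge0]. by rewrite -(sqrt_pow2 (Rabs a)) ?pow2_abs //; apply: Rabs_pos.
Qed.

Lemma enorm_tri n (a b c : vec n) :
  enorm (vsub a c) <= enorm (vsub a b) + enorm (vsub b c).
Proof.
rewrite (@enorm_ext _ (vsub a c) (fun i => vsub a b i + vsub b c i)); first exact: enorm_add.
by move=> i; rewrite /vsub; ring.
Qed.

Lemma enorm_sym n (a b : vec n) : enorm (vsub a b) = enorm (vsub b a).
Proof.
rewrite (@enorm_ext _ (vsub a b) (fun i => (-1) * vsub b a i)); last by move=> i; rewrite /vsub; ring.
rewrite enorm_scale Rabs_Ropp Rabs_R1; ring.
Qed.

Lemma einner_l1 n (u : vec n) : einner u u <= (\big[Rplus/0]_(i<n) Rabs (u i)) ^ 2.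
Proof.
rewrite /einner; elim: n u => [|n IH] u; first by rewrite !bigR0; fold_big; lra.
rewrite !bigR_recr.
have H1 := IH (fun i => u (widen_ord (leqnSn n) i)).
have H2 := @big_ge0 n (fun i => Rabs (u (widen_ord (leqnSn n) i))) (fun i => Rabs_pos _).
have H3 : Rabs (u ord_max) * Rabs (u ord_max) = u ord_max * u ord_max.
  by rewrite -Rabs_mult Rabs_pos_eq //; nra.
have H4 := Rabs_pos (u ord_max).
move: H1 H2; fold_big; nra.
Qed.

Lemma enorm_l1 n (u : vec n) : enorm u <= \big[Rplus/0]_(i<n) Rabs (u i).
Proof.
rewrite -[X in _ <= X]sqrt_pow2; last by apply: big_ge0 => i; apply: Rabs_pos.
apply: sqrt_le_1_alt; apply: einner_l1.
Qed.

Lemma edist_spec n (S : vec n -> Prop) x : enonempty S -> is_glb_dist S x (edist S x).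
Proof.
move=> [y0 Hy0]. rewrite /edist. apply: epsilon_spec.
pose E := fun d' => forall y, S y -> d' <= enorm (vsub x y).
have Hb : bound E by exists (enorm (vsub x y0)) => d' Hd'; exact: Hd' _ Hy0.
have He : exists d, E d by exists 0 => y _; apply: enorm_ge0.
case: (@completeness E Hb He) => l [Hl1 Hl2].
exists l; split.
- move=> y Sy; apply: Hl2 => d' Hd'; exact: Hd' _ Sy.
- move=> d' Hd'; exact: Hl1 _ Hd'.
Qed.

Lemma edist_le n (S : vec n -> Prop) x y : S y -> edist S x <= enorm (vsub x y).
Proof. move=> Sy; have [H _] := edist_spec x (ex_intro _ y Sy); exact: H. Qed.

Lemma edist_ge0 n (S : vec n -> Prop) x : enonempty S -> 0 <= edist S x.
Proof. move=> HS; have [_ H] := edist_spec x HS; apply: H => y _; apply: enorm_ge0. Qed.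

Lemma edist_approx n (S : vec n -> Prop) x eta : enonempty S -> 0 < eta ->
  exists y, S y /\ enorm (vsub x y) < edist S x + eta.
Proof.
move=> HS He; apply: NNPP => Hn.
have [_ H] := edist_spec x HS.
have : edist S x + eta <= edist S x.
  apply: H => y Sy; apply: Rnot_lt_le => Hlt; apply: Hn; exists y; split => //.
lra.
Qed.

Lemma mapply_comb m n (A : mat m n) t (a b : vec n) i :
  mapply A (fun j => t * a j + (1 - t) * b j) i = t * mapply A a i + (1 - t) * mapply A b i.
Proof. rewrite /mapply -!big_scale -big_add; apply: big_ext => j; ring. Qed.

Lemma emodel_convex n m (h : vec m -> R) (F : vec n -> vec m) J c y z t :
  econvex_fun h -> 0 <= t <= 1 ->
  emodel h F J c (vadd (vscale t y) (vscale (1 - t) z)) <=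
  t * emodel h F J c y + (1 - t) * emodel h F J c z.
Proof.
move=> Hh Ht; rewrite /emodel.
have -> : vsub (vadd (vscale t y) (vscale (1 - t) z)) c =
  (fun j => t * vsub y c j + (1 - t) * vsub z c j).
  by apply: functional_extensionality => j; rewrite /vsub /vadd /vscale; ring.
have -> : vadd (F c) (mapply (J c) (fun j => t * vsub y c j + (1 - t) * vsub z c j)) =
  vadd (vscale t (vadd (F c) (mapply (J c) (vsub y c))))
       (vscale (1 - t) (vadd (F c) (mapply (J c) (vsub z c)))).
  apply: functional_extensionality => i; rewrite /vadd /vscale mapply_comb; ring.
exact: Hh.
Qed.

Lemma nsq_comb n t (y p c : vec n) :
  enorm (vsub (vadd (vscale t y) (vscale (1 - t) p)) c) ^ 2 =
  t * enorm (vsub y c) ^ 2 + (1 - t) * enorm (vsub p c) ^ 2 - t * (1 - t) * enorm (vsub y p) ^ 2.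
Proof.
rewrite !enorm_sq.
have -> : vsub (vadd (vscale t y) (vscale (1 - t) p)) c =
  (fun i => t * vsub y c i + (1 - t) * vsub p c i).
  by apply: functional_extensionality => j; rewrite /vsub /vadd /vscale; ring.
have -> : vsub y p = (fun i => 1 * vsub y c i + (-1) * vsub p c i).
  by apply: functional_extensionality => j; rewrite /vsub; ring.
rewrite !einner_lin; ring.
Qed.

Lemma three_point n m X (h : vec m -> R) (F : vec n -> vec m) J c xp beta :
  econvex_set X -> econvex_fun h -> 0 < beta ->
  eargmin (fun y => emodel h F J c y + beta / 2 * enorm (vsub y c) ^ 2) X xp ->
  forall y, X y ->
  emodel h F J c xp + beta / 2 * enorm (vsub xp c) ^ 2 + beta / 2 * enorm (vsub y xp) ^ 2
  <= emodel h F J c y + beta / 2 * enorm (vsub y c) ^ 2.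
Proof.
move=> HX Hh Hb [Xp Hmin] y Xy.
have key : forall t, 0 < t <= 1 ->
  emodel h F J c xp + beta / 2 * enorm (vsub xp c) ^ 2 <=
  t * emodel h F J c y + (1 - t) * emodel h F J c xp +
  beta / 2 * (t * enorm (vsub y c) ^ 2 + (1 - t) * enorm (vsub xp c) ^ 2
              - t * (1 - t) * enorm (vsub y xp) ^ 2).
  move=> t Ht.
  have Ht' : 0 <= t <= 1 by lra.
  have Xt := HX y xp t Xy Xp Ht'.
  have H1 := Hmin _ Xt. cbv beta in H1. rewrite nsq_comb in H1.
  have H2 := @emodel_convex n m h F J c y xp t Hh Ht'.
  lra.
set A := emodel h F J c xp + beta / 2 * enorm (vsub xp c) ^ 2 + beta / 2 * enorm (vsub y xp) ^ 2
  - (emodel h F J c y + beta / 2 * enorm (vsub y c) ^ 2).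
have HA : forall t, 0 < t <= 1 -> A <= beta / 2 * t * enorm (vsub y xp) ^ 2.
  move=> t Ht; have := key t Ht => H.
  have : t * A <= t * (beta / 2 * t * enorm (vsub y xp) ^ 2) by rewrite /A; nra.
  move=> H'; apply: (Rmult_le_reg_l t) => //; lra.
suff : A <= 0 by rewrite /A; lra.
apply: Rnot_lt_le => Apos.
set N := enorm (vsub y xp) ^ 2.
have N0 : 0 <= N by rewrite /N; have := enorm_ge0 (vsub y xp); nra.
have Hd : 0 < beta / 2 * N + A by nra.
set D := beta / 2 * N + A.
have ED : A / D * D = A by rewrite /D; field; lra.
have Ht : 0 < A / D <= 1.
  split; first by apply: Rdiv_lt_0_compat.
  have : 0 <= A / D by apply: Rlt_le; apply: Rdiv_lt_0_compat.
  rewrite /D in ED *; nra.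
have := HA _ Ht.
set t := A / D in ED Ht *.
have E2 : beta / 2 * t * N = A - t * A by rewrite /D in ED; nra.
have : 0 < t * A by apply: Rmult_lt_0_compat; lra.
rewrite -/N; lra.
Qed.

Lemma abs_both a b : Rabs a <= b -> - b <= a <= b.
Proof. move=> H; have := Rle_abs a; have := Rle_abs (- a); rewrite Rabs_Ropp; lra. Qed.

Lemma emodel_self n m (h : vec m -> R) (F : vec n -> vec m) J z : emodel h F J z z = h (F z).
Proof.
rewrite /emodel; f_equal; apply: functional_extensionality => i.
rewrite /vadd /mapply big_zero; first ring.
by move=> j; rewrite /vsub; ring.
Qed.

Lemma le_eps a b c : 0 <= c -> (forall eta, 0 < eta <= 1 -> a <= b + c * eta) -> a <= b.
Proof.
move=> Hc H; apply: Rnot_lt_le => Hab.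
pose eta := Rmin 1 ((a - b) / (2 * (c + 1))).
have He1 : eta <= 1 by apply: Rmin_l.
have He2 : eta <= (a - b) / (2 * (c + 1)) by apply: Rmin_r.
have He0 : 0 < eta.
  apply: Rmin_glb_lt; first lra. apply: Rdiv_lt_0_compat; lra.
have := H eta (conj He0 He1).
have E : (a - b) / (2 * (c + 1)) * (2 * (c + 1)) = a - b by field; lra.
nra.
Qed.

Lemma step_facts n m (X : vec n -> Prop) (h : vec m -> R) F J xbar rho beta mu xk xp :
  econvex_set X -> econvex_fun h -> 0 < rho -> rho <= beta -> 0 < mu ->
  eargmin (fun y => h (F y)) X xbar -> X xk ->
  (forall y, X y -> Rabs (h (F y) - emodel h F J xk y) <= rho / 2 * enorm (vsub y xk) ^ 2) ->
  eargmin (fun y => emodel h F J xk y + beta / 2 * enorm (vsub y xk) ^ 2) X xp ->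
  beta / 2 * enorm (vsub xp xk) ^ 2 <= h (F xk) - h (F xbar) /\
  h (F xp) - h (F xbar) <= beta * edist (eargmin (fun y => h (F y)) X) xk ^ 2 /\
  enorm (vsub xp xk) <= (1 + sqrt 2) * edist (eargmin (fun y => h (F y)) X) xk.
Proof.
move=> HX Hh Hr Hrb Hmu Hxbar Xk Happ Hxp.
have Hb : 0 < beta by lra.
have TP := three_point HX Hh Hb Hxp.
have Xp : X xp by case: Hxp.
have fstar : forall y, X y -> h (F xbar) <= h (F y) by case: Hxbar.
have Xbar : X xbar by case: Hxbar.
set s := enorm (vsub xp xk).
have s0 : 0 <= s by apply: enorm_ge0.
have Ap := Happ _ Xp. rewrite -/s in Ap.
have Ap' := abs_both Ap.
split.
  have := TP _ Xk. rewrite emodel_self -/s (enorm_sym xk xp) -/s.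
  have -> : enorm (vsub xk xk) = 0.
    rewrite (@enorm_ext _ _ (fun i => 0 * xk i)); last by move=> i; rewrite /vsub; ring.
    rewrite enorm_scale Rabs_R0; ring.
  have := fstar _ Xp. nra.
set D := edist _ xk.
have XsNE : enonempty (eargmin (fun y => h (F y)) X) by exists xbar.
have D0 : 0 <= D by apply: edist_ge0.
have key : forall p, eargmin (fun y => h (F y)) X p ->
  h (F xp) - h (F xbar) + beta / 2 * enorm (vsub p xp) ^ 2 <= beta * enorm (vsub xk p) ^ 2.
  move=> p [Xp' Hp].
  have fp : h (F p) = h (F xbar) by have := Hp _ Xbar; have := fstar _ Xp'; lra.
  have := TP _ Xp'. have Ap2 := abs_both (Happ _ Xp').
  rewrite fp (enorm_sym p xk) in Ap2. rewrite -/s.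
  have := pow2_ge_0 (enorm (vsub xk p)) => H0.
  have : 0 <= (beta - rho) * s ^ 2 by apply: Rmult_le_pos; [lra|apply: pow2_ge_0].
  have : 0 <= (beta - rho) * enorm (vsub xk p) ^ 2 by apply: Rmult_le_pos; [lra|apply: pow2_ge_0].
  rewrite (enorm_sym p xk). lra.
have r2 : sqrt 2 * sqrt 2 = 2 by apply: sqrt_sqrt; lra.
have r20 : 0 <= sqrt 2 by apply: sqrt_pos.
have dxp : 0 <= h (F xp) - h (F xbar) by have := fstar _ Xp; lra.
split.
  apply: (@le_eps _ _ (beta * (2 * D + 1))); first nra.
  move=> eta [He0 He1].
  have [p [Sp Hp]] := edist_approx xk XsNE He0.
  have := key p Sp. have := enorm_ge0 (vsub xk p). have := pow2_ge_0 (enorm (vsub p xp)).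
  rewrite -/D in Hp. move=> H1 H2 H3.
  have H4 : enorm (vsub xk p) ^ 2 <= D ^ 2 + (2 * D + 1) * eta by nra.
  have : beta * enorm (vsub xk p) ^ 2 <= beta * (D ^ 2 + (2 * D + 1) * eta)
    by apply: Rmult_le_compat_l; lra.
  nra.
apply: (@le_eps _ _ (1 + sqrt 2)); first lra.
move=> eta [He0 He1].
have [p [Sp Hp]] := edist_approx xk XsNE He0.
rewrite -/D in Hp.
have K := key p Sp.
have Hq : enorm (vsub p xp) <= sqrt 2 * (D + eta).
  have q0 := enorm_ge0 (vsub p xp). have a0 := enorm_ge0 (vsub xk p).
  have H1 : beta * (enorm (vsub p xp) ^ 2) <= beta * (2 * enorm (vsub xk p) ^ 2) by lra.
  have H2 : enorm (vsub p xp) ^ 2 <= 2 * enorm (vsub xk p) ^ 2 by apply: (Rmult_le_reg_l beta).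
  have H3 : enorm (vsub p xp) ^ 2 <= (sqrt 2 * (D + eta)) ^ 2.
    have E : (sqrt 2 * (D + eta)) ^ 2 = (sqrt 2 * sqrt 2) * (D + eta) ^ 2 by ring.
    rewrite r2 in E; rewrite E.
    have : enorm (vsub xk p) ^ 2 <= (D + eta) ^ 2 by nra.
    lra.
  apply: Rsqr_incr_0_var; [rewrite /Rsqr; nra | nra].
have := enorm_tri xp p xk. rewrite -/s (enorm_sym xp p) (enorm_sym p xk).
have := enorm_ge0 (vsub xk p). nra.
Qed.

Fixpoint sumr (a : nat -> R) (k l : nat) : R :=
  match l with 0%nat => 0 | S l => sumr a k l + a (k + l)%nat end.

Definition Phi (e : R) := 1 + e + e ^ 3 + 2 * e ^ 7.

Lemma Phi_mono a b : 0 <= a <= b -> Phi a <= Phi b.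
Proof.
move=> [H1 H2]; rewrite /Phi.
have := pow_incr a b 3 (conj H1 H2); have := pow_incr a b 7 (conj H1 H2); lra.
Qed.

Lemma Phi_ge1 e : 0 <= e -> 1 <= Phi e.
Proof. move=> H; rewrite /Phi; have := pow_le e 3 H; have := pow_le e 7 H; lra. Qed.

Lemma Phi_key e : 0 <= e <= 1 / 2 -> e * Phi (e ^ 2) <= Phi e - 1.
Proof.
move=> [H1 H2]; rewrite /Phi.
have E : e * (1 + e ^ 2 + (e ^ 2) ^ 3 + 2 * (e ^ 2) ^ 7) = e + e ^ 3 + e ^ 7 + 2 * (e ^ 7 * e ^ 8) by ring.
rewrite E.
have H8 : e ^ 8 <= (1/2) ^ 8 by apply: pow_incr; lra.
have H7 := pow_le e 7 H1.
have : e ^ 7 * e ^ 8 <= e ^ 7 * (1/2) ^ 8 by apply: Rmult_le_compat_l.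
lra.
Qed.

Lemma potential (s D : nat -> R) c r k l :
  0 < c -> 0 <= r -> (forall j, 0 <= D j) -> c * D k <= 1 / 2 ->
  (forall i, (i < l)%nat -> s (k + i)%nat <= r * D (k + i)%nat /\
                            D (k + i).+1 <= c * D (k + i)%nat * D (k + i)%nat) ->
  sumr s k l + r * D (k + l)%nat * Phi (c * D (k + l)%nat) <= r * D k * Phi (c * D k) /\
  c * D (k + l)%nat <= 1 / 2.
Proof.
move=> Hc Hr HD Hk; elim: l => [|l IH] H.
  rewrite addn0 /=; lra.
have [IH1 IH2] := IH (fun i Hi => H i (ltnW Hi)).
have [H1 H2] := H l (ltnSn l).
rewrite /= addnS.
set d := D (k + l)%nat in IH1 IH2 H1 H2 *.
set d' := D (k + l).+1 in H2 *.
have d0 : 0 <= d by apply: HD.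
have d'0 : 0 <= d' by apply: HD.
set e := c * d in IH1 IH2 H2 *.
have e0 : 0 <= e by rewrite /e; nra.
have Hd' : d' <= e * d by exact: H2.
have He' : c * d' <= e ^ 2.
  have := Rmult_le_compat_l c _ _ (Rlt_le _ _ Hc) Hd'.
  have -> : c * (e * d) = e ^ 2 by rewrite /e; ring.
  done.
have He'0 : 0 <= c * d' by nra.
have P1 : Phi (c * d') <= Phi (e ^ 2) by apply: Phi_mono; lra.
have P2 := Phi_key (conj e0 IH2).
have P3 : 1 <= Phi (c * d') by apply: Phi_ge1.
have P4 : d' * Phi (c * d') <= e * d * Phi (e ^ 2).
  apply: Rmult_le_compat => //; lra.
have P5 : d' * Phi (c * d') <= d * (Phi e - 1).
  apply: (Rle_trans _ _ _ P4).
  have -> : e * d * Phi (e ^ 2) = d * (e * Phi (e ^ 2)) by ring.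
  by apply: Rmult_le_compat_l.
split.
  have : r * (d' * Phi (c * d')) <= r * (d * (Phi e - 1)) by apply: Rmult_le_compat_l.
  lra.
have : e ^ 2 <= 1 / 4 by nra.
lra.
Qed.

Lemma chain n (x : nat -> vec n) k l :
  enorm (vsub (x (k + l)%nat) (x k)) <= sumr (fun j => enorm (vsub (x j.+1) (x j))) k l.
Proof.
elim: l => [|l IH].
  rewrite addn0 /= (@enorm_ext _ _ (fun i => 0 * x k i)); last by move=> i; rewrite /vsub; ring.
  rewrite enorm_scale Rabs_R0; lra.
rewrite /= addnS.
have := enorm_tri (x (k + l).+1) (x (k + l)%nat) (x k). lra.
Qed.

Lemma sumr_shift a l : sumr a 0 l.+1 = a 0%nat + sumr a 1 l.
Proof.
elim: l => [|l IH]; first by rewrite /= add0n; ring.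
change (sumr a 0 l.+2) with (sumr a 0 l.+1 + a (0 + l.+1)%nat).
change (sumr a 1 l.+1) with (sumr a 1 l + a (1 + l)%nat).
rewrite IH add0n add1n; ring.
Qed.

Lemma sumr_le a b k l : (forall j, (j < l)%nat -> a (k + j)%nat <= b (k + j)%nat) ->
  sumr a k l <= sumr b k l.
Proof.
elim: l => [|l IH] H /=; first lra.
have := IH (fun j Hj => H j (ltnW Hj)); have := H l (ltnSn l); lra.
Qed.

Lemma sumr_ge0 a k l : (forall j, 0 <= a j) -> 0 <= sumr a k l.
Proof. move=> H; elim: l => [|l IH] /=; first lra. have := H (k + l)%nat; lra. Qed.

Lemma sumr_ind_const (b c : R) (i l : nat) :
  sumr (fun j => b + (if i == j then c else 0)) 0 l = INR l * b + (if (i < l)%nat then c else 0).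
Proof.
elim: l => [|l IH]; first by rewrite /= ?ltn0; ring.
rewrite S_INR /= IH add0n ltnS [leq i l]leq_eqVlt.
case: (eqVneq i l) => [->|Hne]; first by rewrite ltnn /=; ring.
rewrite /=; case: (leq i.+1 l); ring.
Qed.

Lemma jensen m (h : vec m -> R) (a : nat -> vec m) k : econvex_fun h ->
  h (fun i => / INR k.+1 * sumr (fun j => a j i) 0 k.+1) <=
  / INR k.+1 * sumr (fun j => h (a j)) 0 k.+1.
Proof.
move=> Hh; elim: k => [|k IH].
  have -> : (fun i => / INR 1 * sumr (fun j => a j i) 0 1) = a 0%nat.
    by apply: functional_extensionality => i; rewrite /= add0n; field.
  rewrite /= add0n; have -> : / 1 * (0 + h (a 0%nat)) = h (a 0%nat) by field.
  lra.
have Hk1 : 0 < INR k.+1 by apply: lt_0_INR; apply/ltP.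
have Hk2 : INR k.+2 = INR k.+1 + 1 by rewrite S_INR.
set t := INR k.+1 / INR k.+2.
have Et : t * INR k.+2 = INR k.+1 by rewrite /t Hk2; field; lra.
have Ht : 0 <= t <= 1.
  have : 0 <= t by rewrite /t; apply: Rlt_le; apply: Rdiv_lt_0_compat; lra.
  rewrite Hk2 in Et; nra.
have -> : (fun i => / INR k.+2 * sumr (fun j => a j i) 0 k.+2) =
  vadd (vscale t (fun i => / INR k.+1 * sumr (fun j => a j i) 0 k.+1)) (vscale (1 - t) (a k.+1)).
  apply: functional_extensionality => i.
  change (sumr (fun j => a j i) 0 k.+2) with (sumr (fun j => a j i) 0 k.+1 + a (0 + k.+1)%nat i).
  rewrite /vadd /vscale /t add0n Hk2; field; lra.
apply: Rle_trans; first exact: Hh.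
change (sumr (fun j => h (a j)) 0 k.+2) with (sumr (fun j => h (a j)) 0 k.+1 + h (a (0 + k.+1)%nat)).
rewrite add0n.
have := Rmult_le_compat_l t _ _ (proj1 Ht) IH.
have -> : t * (/ INR k.+1 * sumr (fun j => h (a j)) 0 k.+1) =
  / INR k.+2 * sumr (fun j => h (a j)) 0 k.+1 by rewrite /t Hk2; field; lra.
have -> : 1 - t = / INR k.+2 by rewrite /t Hk2; field; lra.
lra.
Qed.

Lemma conv_ub m (h : vec m -> R) (q : vec m) : econvex_fun h ->
  exists M, forall w : vec m, (forall i, Rabs (w i) <= 1) -> h (vadd q w) <= M.
Proof.
move=> Hh; case: m h q Hh => [|m'] h q Hh.
  exists (h q) => w _; have -> : vadd q w = q by apply: functional_extensionality => -[].
  lra.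
set m := m'.+1.
pose e (j : nat) : vec m := fun i => if nat_of_ord i == j then 1 else 0.
pose P j := vadd q (vscale (INR m) (e j)).
pose Q j := vadd q (vscale (- INR m) (e j)).
exists (sumr (fun j => Rabs (h (P j)) + Rabs (h (Q j))) 0 m) => w Hw.
have Hm : 0 < INR m by apply: lt_0_INR; apply/ltP.
pose a (j : nat) : vec m := fun i => q i + (if nat_of_ord i == j then INR m * w i else 0).
have E1 : vadd q w = (fun i => / INR m * sumr (fun j => a j i) 0 m).
  apply: functional_extensionality => i.
  rewrite /a sumr_ind_const ltn_ord /vadd; field; lra.
rewrite E1; apply: Rle_trans; first exact: (@jensen m h a m' Hh).
have Hb : forall j, (j < m)%nat -> h (a j) <= Rabs (h (P j)) + Rabs (h (Q j)).
  move=> j Hj.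
  pose o := Ordinal Hj.
  set s := INR m * w o.
  have Hs : Rabs s <= INR m.
    rewrite /s Rabs_mult Rabs_pos_eq; last lra.
    have := Hw o; have := Rabs_pos (w o); nra.
  have [Hs1 Hs2] := abs_both Hs.
  set t := (s + INR m) / (2 * INR m).
  have Et : t * (2 * INR m) = s + INR m by rewrite /t; field; lra.
  have Ht : 0 <= t <= 1 by nra.
  have -> : a j = vadd (vscale t (P j)) (vscale (1 - t) (Q j)).
    apply: functional_extensionality => i.
    rewrite /a /P /Q /vadd /vscale /e.
    case: (eqVneq (nat_of_ord i) j) => [Eij|Hne].
      have -> : i = o by apply: val_inj.
      rewrite -/s. nra.
    ring.
  apply: Rle_trans; first exact: Hh.
  have := Rle_abs (h (P j)); have := Rle_abs (h (Q j)).
  have := Rabs_pos (h (P j)); have := Rabs_pos (h (Q j)). nra.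
have S1 : sumr (fun j => h (a j)) 0 m <= sumr (fun j => Rabs (h (P j)) + Rabs (h (Q j))) 0 m.
  apply: sumr_le => j Hj; rewrite add0n; exact: Hb.
have S0 : 0 <= sumr (fun j => Rabs (h (P j)) + Rabs (h (Q j))) 0 m.
  apply: sumr_ge0 => j; have := Rabs_pos (h (P j)); have := Rabs_pos (h (Q j)); lra.
have Hinv : / INR m <= 1.
  have : 1 <= INR m by apply: (le_INR 1); apply/leP.
  move=> H1; rewrite -Rinv_1; apply: Rinv_le_contravar; lra.
have Hinv0 : 0 < / INR m by apply: Rinv_0_lt_compat.
change (m'.+1) with m.
nra.
Qed.

Lemma rpow_S k : Rpower (/2) (Rpower 2 (INR k.+1 - 1)) = (/2) ^ (Nat.pow 2 k).
Proof.
have -> : INR k.+1 - 1 = INR k by rewrite S_INR; ring.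
rewrite Rpower_pow; last lra.
have -> : 2 ^ k = INR (Nat.pow 2 k) by rewrite pow_INR /=; f_equal; ring.
rewrite Rpower_pow //; lra.
Qed.

Lemma rpow_0 : Rpower (/2) (Rpower 2 (INR 0 - 1)) = sqrt (/2).
Proof.
have -> : INR 0 - 1 = - 1 by rewrite /=; ring.
rewrite Rpower_Ropp Rpower_1; last lra.
by rewrite Rpower_sqrt //; lra.
Qed.

Lemma half_pow_bound k : 0 <= (/2) ^ (Nat.pow 2 k) <= /2 /\
  (/2) ^ (Nat.pow 2 k.+1) = ((/2) ^ (Nat.pow 2 k)) ^ 2.
Proof.
have E : forall j, (/2) ^ (Nat.pow 2 j.+1) = ((/2) ^ (Nat.pow 2 j)) ^ 2.
  move=> j; rewrite -pow_mult; f_equal; rewrite /= Nat.mul_comm; done.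
split; last exact: E.
elim: k => [|k [IH1 IH2]]; first by rewrite /=; lra.
rewrite E; nra.
Qed.

Lemma lim_coords n (u : 'I_n -> nat -> R) (l : vec n) :
  (forall i, Un_cv (u i) (l i)) ->
  forall eta, 0 < eta -> exists N, forall k, (N <= k)%nat -> forall i, Rabs (u i k - l i) < eta.
Proof.
move=> H eta He.
pose P i N := forall k, (k >= N)%coq_nat -> Rdist (u i k) (l i) < eta.
pose Nf i := epsilon (inhabits 0%nat) (P i).
have HN : forall i, P i (Nf i) by move=> i; apply: epsilon_spec; apply: H; lra.
exists (\max_(i < n) Nf i) => k Hk i.
have := HN i k. rewrite /Rdist; apply; apply/leP.
apply: leq_trans Hk; first [exact: leq_bigmax | exact: (leq_bigmax_cond (P:=xpredT))].
Qed.

Lemma half_pow_lin k : (/2) ^ (Nat.pow 2 k) <= (/2) ^ k.+1.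
Proof.
elim: k => [|k IH]; first by rewrite /=; lra.
have [[H0 H1] E] := half_pow_bound k.
rewrite E; change ((/2) ^ k.+2) with (/2 * (/2) ^ k.+1).
nra.
Qed.

Unset Implicit Arguments.
Set Strict Implicit.
Theorem theorem5p7 (n m : nat) (X : vec n -> Prop) (h : vec m -> R)
  (F : vec n -> vec m) (J : vec n -> mat m n)
  (xbar : vec n) (eps mu rho beta : R) (x0 : vec n) (x : nat -> vec n) :
  enonempty X -> eclosed_set X -> econvex_set X ->
  econvex_fun h ->
  has_jacobian F J ->
  eargmin (fun y => h (F y)) X xbar ->
  0 < eps -> 0 < mu -> 0 < rho ->
  (forall z y, X z -> eball xbar eps z -> X y ->
     Rabs (h (F y) - emodel h F J z y) <= rho / 2 * (enorm (vsub y z)) ^ 2) ->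
  (forall z, X z -> eball xbar eps z ->
     h (F z) - h (F xbar) >= mu * edist (eargmin (fun y => h (F y)) X) z) ->
  rho <= beta ->
  X x0 -> eball xbar (eps / 2) x0 ->
  h (F x0) - h (F xbar) <= Rmin (beta * eps ^ 2 / 25) (mu ^ 2 / (2 * beta)) ->
  x 0%nat = x0 ->
  (forall k, eargmin (fun y => emodel h F J (x k) y + beta / 2 * (enorm (vsub y (x k))) ^ 2)
               X (x (S k))) ->
  (forall k, eball xbar eps (x k)) /\
  (forall k, edist (eargmin (fun y => h (F y)) X) (x (S k)) <=
             beta / mu * (edist (eargmin (fun y => h (F y)) X) (x k)) ^ 2) /\
  (forall k, h (F (x (S k))) - h (F xbar) <=
             beta / mu ^ 2 * (h (F (x k)) - h (F xbar)) ^ 2) /\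
  (exists xinf, eargmin (fun y => h (F y)) X xinf /\
     (forall e, 0 < e -> exists N, forall k, (N <= k)%nat -> enorm (vsub (x k) xinf) < e) /\
     (forall k, enorm (vsub (x k) xinf) <=
        2 * sqrt 2 * mu / beta * Rpower (/ 2) (Rpower 2 (INR k - 1)))).
Proof.
move=> HXne HXcl HXcv Hh HJ Hxbar Heps Hmu Hrho Happ Hsharp Hrb Xx0 Bx0 Hx0 Hx0eq Hstep.
have Hb : 0 < beta by lra.
set Xs := eargmin (fun y => h (F y)) X.
have XsNE : enonempty Xs by exists xbar.
have Xbar : X xbar by case: Hxbar.
have fstar : forall y, X y -> h (F xbar) <= h (F y) by case: Hxbar.
have Xk : forall k, X (x k) by case=> [|k]; [rewrite Hx0eq | case: (Hstep k)].
set s := fun j => enorm (vsub (x j.+1) (x j)).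
set D := fun j => edist Xs (x j).
set del := fun j => h (F (x j)) - h (F xbar).
set c := beta / mu.
have Hc : 0 < c by rewrite /c; apply: Rdiv_lt_0_compat.
have D0 : forall j, 0 <= D j by move=> j; apply: edist_ge0.
have del0 : forall j, 0 <= del j by move=> j; have := fstar _ (Xk j); rewrite /del; lra.
have s0 : forall j, 0 <= s j by move=> j; apply: enorm_ge0.
have SF : forall k, eball xbar eps (x k) ->
   beta / 2 * s k ^ 2 <= del k /\ del k.+1 <= beta * D k ^ 2 /\ s k <= (1 + sqrt 2) * D k.
  move=> k Bk.
  exact: (step_facts HXcv Hh Hrho Hrb Hmu Hxbar (Xk k) (fun y Xy => Happ _ _ (Xk k) Bk Xy) (Hstep k)).
have SH : forall k, eball xbar eps (x k) -> mu * D k <= del k.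
  move=> k Bk; have := Hsharp _ (Xk k) Bk; rewrite /D /del /Xs; lra.
have REC : forall k, eball xbar eps (x k) -> eball xbar eps (x k.+1) -> D k.+1 <= c * D k * D k.
  move=> k Bk Bk1.
  have [_ [H1 _]] := SF k Bk. have H2 := SH _ Bk1.
  apply: (Rmult_le_reg_l mu) => //.
  have -> : mu * (c * D k * D k) = beta * D k ^ 2 by rewrite /c; field; lra.
  lra.
set r2 := sqrt 2.
have r2sq : r2 * r2 = 2 by apply: sqrt_sqrt; lra.
have r2p : 0 <= r2 by apply: sqrt_pos.
have r2lo : 1.41421 <= r2 by nra.
have r2hi : r2 <= 1.41422 by nra.
have Hd0 : del 0%nat = h (F x0) - h (F xbar) by rewrite /del Hx0eq.
have Hd1 : del 0%nat <= beta * eps ^ 2 / 25 by rewrite Hd0; apply: Rle_trans Hx0 _; apply: Rmin_l.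
have Hd2 : del 0%nat <= mu ^ 2 / (2 * beta) by rewrite Hd0; apply: Rle_trans Hx0 _; apply: Rmin_r.
have B0 : eball xbar eps (x 0%nat) by rewrite Hx0eq; move: Bx0; rewrite /eball; lra.
have [SF0a [SF0b SF0c]] := SF _ B0.
have SH0 := SH _ B0.
have s0eps : s 0%nat <= 0.28285 * eps.
  have : s 0%nat ^ 2 <= 2 * eps ^ 2 / 25.
    apply: (Rmult_le_reg_l (beta / 2)); first lra.
    have -> : beta / 2 * (2 * eps ^ 2 / 25) = beta * eps ^ 2 / 25 by field.
    lra.
  have := s0 0%nat. nra.
have s0mu : s 0%nat <= mu / beta.
  have : (beta * s 0%nat) ^ 2 <= mu ^ 2.
    have E : mu ^ 2 = 2 * beta * (mu ^ 2 / (2 * beta)) by field; lra.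
    rewrite E. have := Rmult_le_compat_l (2 * beta) _ _ (ltac:(lra) : 0 <= 2 * beta) (Rle_trans _ _ _ SF0a Hd2).
    have -> : 2 * beta * (beta / 2 * s 0%nat ^ 2) = (beta * s 0%nat) ^ 2 by field.
    done.
  move=> H; apply: (Rmult_le_reg_l beta) => //.
  have -> : beta * (mu / beta) = mu by field; lra.
  have := s0 0%nat. nra.
have e0 : c * D 0%nat <= 1 / 2.
  have : beta * (mu * D 0%nat) <= beta * (mu ^ 2 / (2 * beta)) by apply: Rmult_le_compat_l; lra.
  have -> : beta * (mu ^ 2 / (2 * beta)) = mu * (mu / 2) by field; lra.
  move=> H; apply: (Rmult_le_reg_l mu) => //.
  have -> : mu * (c * D 0%nat) = beta * (mu * D 0%nat) / mu by rewrite /c; field; lra.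
  have -> : beta * (mu * D 0%nat) / mu = beta * D 0%nat by field; lra.
  nra.
have D0eps : D 0%nat <= 0.141422 * eps.
  have H1 : (mu * D 0%nat) ^ 2 <= (beta * eps ^ 2 / 25) * (mu ^ 2 / (2 * beta)).
    have a1 : 0 <= mu * D 0%nat by have := D0 0%nat; nra.
    have a2 : (mu * D 0%nat) ^ 2 <= del 0%nat ^ 2 by nra.
    have a3 : del 0%nat * del 0%nat <= (beta * eps ^ 2 / 25) * (mu ^ 2 / (2 * beta)).
      apply: Rmult_le_compat => //; apply: del0.
    nra.
  have E : (beta * eps ^ 2 / 25) * (mu ^ 2 / (2 * beta)) = mu ^ 2 * (eps ^ 2 / 50) by field; lra.
  rewrite E in H1.
  have H2 : D 0%nat ^ 2 <= eps ^ 2 / 50.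
    apply: (Rmult_le_reg_l (mu ^ 2)); first nra. nra.
  have := D0 0%nat. nra.
have P14 : Phi (1 / 4) <= 1.2658 by rewrite /Phi; simpl; lra.
have BALL : forall N j, (j <= N)%nat -> eball xbar eps (x j).
  elim=> [|N IH] j Hj.
    by move: Hj; rewrite leqn0 => /eqP ->.
  move: Hj; rewrite leq_eqVlt => /orP [/eqP ->|Hj]; last by apply: IH; rewrite -ltnS.
  rewrite /eball.
  have T := enorm_tri (x N.+1) (x 0%nat) xbar.
  have Bx0' : enorm (vsub (x 0%nat) xbar) <= eps / 2 by rewrite Hx0eq.
  have CH := chain x 0 N.+1. rewrite add0n -/s in CH.
  case: N IH CH T => [|l] IH CH T.
    have E : sumr s 0 1 = s 0%nat by rewrite /= add0n; ring.
    rewrite E in CH. lra.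
  rewrite sumr_shift in CH.
  have E : sumr s 1 l.+1 = sumr s 1 l + s l.+1 by rewrite /= add1n.
  rewrite E in CH.
  have B1 : eball xbar eps (x 1%nat) by apply: IH.
  have R0 := REC _ B0 B1.
  have D1 : D 1%nat <= D 0%nat / 2.
    have : c * D 0%nat * D 0%nat <= 1 / 2 * D 0%nat by apply: Rmult_le_compat_r.
    lra.
  have e1 : c * D 1%nat <= 1 / 4.
    have := Rmult_le_compat_l c _ _ (Rlt_le _ _ Hc) R0.
    have := D0 0%nat. nra.
  have e1' : c * D 1%nat <= 1 / 2 by lra.
  have PT := @potential s D c (1 + r2) 1 l Hc (ltac:(lra)) D0 e1'.
  have [PT1 _] : sumr s 1 l + (1 + r2) * D (1 + l)%nat * Phi (c * D (1 + l)%nat)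
      <= (1 + r2) * D 1%nat * Phi (c * D 1%nat) /\ c * D (1 + l)%nat <= 1 / 2.
    apply: PT => i Hi.
    have Bi : eball xbar eps (x (1 + i)%nat) by apply: IH; rewrite add1n; apply: ltnW.
    have Bi1 : eball xbar eps (x (1 + i).+1) by apply: IH; rewrite add1n.
    split; [exact: (proj2 (proj2 (SF _ Bi)))|exact: REC].
  rewrite add1n in PT1.
  have Bl : eball xbar eps (x l.+1) by apply: IH.
  have sl := proj2 (proj2 (SF _ Bl)).
  have Pl : 1 <= Phi (c * D l.+1) by apply: Phi_ge1; have := D0 l.+1; nra.
  rewrite -/r2 in sl.
  have : (1 + r2) * D l.+1 <= (1 + r2) * D l.+1 * Phi (c * D l.+1).
    have : 0 <= (1 + r2) * D l.+1 by have := D0 l.+1; nra.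
    nra.
  have Pb : Phi (c * D 1%nat) <= 1.2658.
    apply: Rle_trans P14; apply: Phi_mono; have := D0 1%nat; nra.
  have Q : (1 + r2) * D 1%nat * Phi (c * D 1%nat) <= 2.41422 * (0.070711 * eps) * 1.2658.
    apply: Rmult_le_compat.
    - have := D0 1%nat; nra.
    - have := D0 1%nat; have := Phi_ge1 (ltac:(have := D0 1%nat; nra) : 0 <= c * D 1%nat); lra.
    - apply: Rmult_le_compat; try lra; first by apply: D0.
    - exact: Pb.
  lra.
have Ball : forall k, eball xbar eps (x k) by move=> k; apply: (BALL k).
have RECk : forall k, D k.+1 <= c * D k * D k by move=> k; apply: REC.
have SFk : forall k, s k <= (1 + r2) * D k by move=> k; exact: (proj2 (proj2 (SF _ (Ball k)))).
have ek : forall k, c * D k <= (/2) ^ (Nat.pow 2 k).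
  elim=> [|k IH]; first by rewrite /=; lra.
  have [[H0 H1] E] := half_pow_bound k. rewrite E.
  have := Rmult_le_compat_l c _ _ (Rlt_le _ _ Hc) (RECk k).
  have := D0 k. have : 0 <= c * D k by have := D0 k; nra. nra.
have ehalf : forall k, c * D k <= 1 / 2.
  move=> k; have [[H0 H1] _] := half_pow_bound k; have := ek k; lra.
set G := fun k => (1 + r2) * D k * Phi (c * D k).
have G0 : forall k, 0 <= G k.
  move=> k; rewrite /G; have := Phi_ge1 (ltac:(have := D0 k; nra) : 0 <= c * D k).
  have := D0 k => ? ?; apply: Rmult_le_pos; [apply: Rmult_le_pos|]; lra.
have TAIL : forall k l, sumr s k l <= G k.
  move=> k l.
  have [H _] := @potential s D c (1 + r2) k l Hc (ltac:(lra)) D0 (ehalf k)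
    (fun i _ => conj (SFk _) (RECk _)).
  have := G0 (k + l)%nat. rewrite /G in H *. lra.
have DIST : forall k l, enorm (vsub (x (k + l)%nat) (x k)) <= G k.
  move=> k l; apply: Rle_trans (TAIL k l); exact: chain.
set Kc := (1 + r2) * Phi (1 / 2) * (mu / beta).
have Kc0 : 0 < Kc.
  rewrite /Kc; have := Phi_ge1 (ltac:(lra) : 0 <= 1 / 2).
  have : 0 < mu / beta by apply: Rdiv_lt_0_compat.
  move=> H1 H2. apply: Rmult_lt_0_compat; [nra|done].
have Gb : forall k, G k <= Kc * (/2) ^ k.+1.
  move=> k; rewrite /G /Kc.
  have ED : D k = mu / beta * (c * D k) by rewrite /c; field; lra.
  have e0k : 0 <= c * D k by have := D0 k; nra.
  have Pk : Phi (c * D k) <= Phi (1 / 2) by apply: Phi_mono; have := ehalf k; lra.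
  have P1 := Phi_ge1 e0k.
  have := half_pow_lin k. have := ek k.
  have : 0 < mu / beta by apply: Rdiv_lt_0_compat.
  move=> Hmb H1 H2. rewrite {1}ED.
  have H3 : c * D k <= (/2) ^ k.+1 by lra.
  have : (1 + r2) * (mu / beta * (c * D k)) * Phi (c * D k) <=
         (1 + r2) * (mu / beta * (/2) ^ k.+1) * Phi (1 / 2).
    apply: Rmult_le_compat; try lra.
    - apply: Rmult_le_pos; [lra|]; apply: Rmult_le_pos; lra.
    - apply: Rmult_le_compat_l; [lra|]; apply: Rmult_le_compat_l; lra.
  move=> H; apply: Rle_trans H _; right; ring.
have SMALL : forall eta, 0 < eta -> exists N, forall k, (N <= k)%nat -> G k < eta.
  move=> eta He.
  have [N HN] := pow_lt_1_zero (/2) (ltac:(rewrite Rabs_pos_eq; lra)) (eta / Kc)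
    (ltac:(apply: Rdiv_lt_0_compat; lra)).
  exists N => k Hk.
  have := HN k.+1 (ltac:(apply/leP; apply: leqW)).
  rewrite Rabs_pos_eq; last by apply: pow_le; lra.
  move=> H; apply: Rle_lt_trans (Gb k) _.
  have : Kc * (/2) ^ k.+1 < Kc * (eta / Kc) by apply: (Rmult_lt_compat_l Kc); [exact: Kc0|exact: H].
  have -> : Kc * (eta / Kc) = eta by field; lra.
  done.
have CC : forall i, Cauchy_crit (fun k => x k i).
  move=> i eta He.
  have [N HN] := SMALL eta He.
  exists N => p q Hp Hq; rewrite /Rdist.
  have Hp' : (N <= p)%nat by apply/leP.
  case: (leqP p q) => Hpq.
    have E : q = (p + (q - p))%nat by rewrite subnKC.
    rewrite Rabs_minus_sym.
    apply: Rle_lt_trans (HN p Hp').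
    apply: Rle_trans (DIST p (q - p)%nat). rewrite -E.
    exact: (coord_le (vsub (x q) (x p)) i).
  have E : p = (q + (p - q))%nat by rewrite subnKC // ltnW.
  have Hq' : (N <= q)%nat by apply/leP.
  apply: Rle_lt_trans (HN q Hq').
  apply: Rle_trans (DIST q (p - q)%nat). rewrite -E.
  exact: (coord_le (vsub (x p) (x q)) i).
pose xinf : vec n := fun i => proj1_sig (R_complete _ (CC i)).
have Hlim : forall i, Un_cv (fun k => x k i) (xinf i) by move=> i; exact: (proj2_sig (R_complete _ (CC i))).
have CONV : forall eta, 0 < eta -> exists N, forall k, (N <= k)%nat -> enorm (vsub (x k) xinf) < eta.
  move=> eta He.
  have Hn : 0 < INR n + 1 by have := pos_INR n; lra.
  have [N HN] := @lim_coords n (fun i k => x k i) xinf Hlim (eta / (INR n + 1))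
    (ltac:(apply: Rdiv_lt_0_compat; lra)).
  exists N => k Hk.
  apply: Rle_lt_trans; first exact: enorm_l1.
  apply: Rle_lt_trans; first by apply: big_const_le => i; apply: Rlt_le; exact: (HN k Hk i).
  have := pos_INR n.
  have -> : INR n * (eta / (INR n + 1)) = eta - eta / (INR n + 1) by field; lra.
  have : 0 < eta / (INR n + 1) by apply: Rdiv_lt_0_compat.
  lra.
have LIMB : forall k B, (forall l, enorm (vsub (x (k + l)%nat) (x k)) <= B) ->
    enorm (vsub (x k) xinf) <= B.
  move=> k B HB.
  apply: (@le_eps _ _ 1); first lra.
  move=> eta [He _].
  have [N HN] := CONV eta He.
  have := HN (k + N)%nat (leq_addl _ _).
  have := enorm_tri (x k) (x (k + N)%nat) xinf.
  have := HB N. rewrite enorm_sym. lra.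
have mb0 : 0 < mu / beta by apply: Rdiv_lt_0_compat.
have EDk : forall k, D k = mu / beta * (c * D k) by move=> k; rewrite /c; field; lra.
split; first exact: Ball.
split.
  move=> k; apply: Rle_trans (RECk k) _; right; rewrite /D; ring.
split.
  move=> k.
  have [_ [H1 _]] := SF k (Ball k). have H2 := SH _ (Ball k).
  change (del k.+1 <= beta / mu ^ 2 * del k ^ 2).
  have a1 : 0 <= mu * D k by have := D0 k; nra.
  have a2 : (mu * D k) ^ 2 <= del k ^ 2 by nra.
  have E : beta * D k ^ 2 = beta / mu ^ 2 * (mu * D k) ^ 2 by field; lra.
  have : beta / mu ^ 2 * (mu * D k) ^ 2 <= beta / mu ^ 2 * del k ^ 2.
    apply: Rmult_le_compat_l => //. apply: Rlt_le; apply: Rdiv_lt_0_compat => //; nra.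
  lra.
exists xinf.
have Xinf : X xinf.
  apply: HXcl => e He. have [N HN] := CONV e He.
  exists (x N); split; [exact: Xk|exact: HN].
have Binf : eball xbar eps xinf.
  rewrite /eball. apply: (@le_eps _ _ 1); first lra.
  move=> eta [He _]. have [N HN] := CONV eta He.
  have := HN N (leqnn N). have := Ball N. rewrite /eball.
  have := enorm_tri xinf (x N) xbar. rewrite (enorm_sym xinf (x N)). lra.
split.
  split => // y Xy.
  suff : h (F xinf) <= h (F xbar) by have := fstar y Xy; lra.
  have [M HM] := conv_ub (F xinf) Hh.
  set A := J xinf.
  set CA := \big[Rplus/0]_(i<m) \big[Rplus/0]_(j<n) Rabs (A i j).
  have CA0 : 0 <= CA by apply: big_ge0 => i; apply: big_ge0 => j; apply: Rabs_pos.
  have Av : forall v i, Rabs (mapply A v i) <= CA * enorm v.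
    move=> v i. rewrite /mapply.
    apply: Rle_trans; first exact: big_abs.
    apply: (@Rle_trans _ (\big[Rplus/0]_(j<n) (Rabs (A i j) * enorm v))).
      apply: big_le => j; rewrite Rabs_mult; apply: Rmult_le_compat_l; [apply: Rabs_pos|apply: coord_le].
    rewrite (@big_ext _ _ (fun j => enorm v * Rabs (A i j))); last by move=> j; ring.
    rewrite big_scale Rmult_comm; apply: Rmult_le_compat_r; first exact: enorm_ge0.
    exact: (@big_term m (fun i => \big[Rplus/0]_(j<n) Rabs (A i j)) i (fun i => big_ge0 (fun j => Rabs_pos _))).
  have MODk : forall k, h (vadd (F xinf) (mapply A (vsub (x k) xinf))) <=
      h (F (x k)) + rho / 2 * enorm (vsub (x k) xinf) ^ 2.
    move=> k; have := abs_both (Happ _ _ Xinf Binf (Xk k)); rewrite /emodel -/A; lra.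
  have CVX : forall k lam, 0 < lam <= 1 / 2 -> CA * enorm (vsub (x k) xinf) <= lam ->
      h (F xinf) <= lam * M + (1 - lam) * h (vadd (F xinf) (mapply A (vsub (x k) xinf))).
    move=> k lam [Hl1 Hl2] Hv.
    set v := vsub (x k) xinf in Hv *.
    pose w : vec m := fun i => - ((1 - lam) / lam) * mapply A v i.
    have Hw : forall i, Rabs (w i) <= 1.
      move=> i; rewrite /w Rabs_mult Rabs_Ropp Rabs_pos_eq; last first.
        apply: Rlt_le; apply: Rdiv_lt_0_compat; lra.
      have := Av v i. have := Rabs_pos (mapply A v i).
      have E : (1 - lam) / lam * lam = 1 - lam by field; lra.
      have : 0 < (1 - lam) / lam by apply: Rdiv_lt_0_compat; lra.
      nra.
    have HMw := HM w Hw.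
    have E : F xinf = vadd (vscale lam (vadd (F xinf) w))
                            (vscale (1 - lam) (vadd (F xinf) (mapply A v))).
      apply: functional_extensionality => i; rewrite /vadd /vscale /w; field; lra.
    have H1 : h (F xinf) <= lam * h (vadd (F xinf) w) + (1 - lam) * h (vadd (F xinf) (mapply A v)).
      rewrite {1}E; apply: Hh; lra.
    have : lam * h (vadd (F xinf) w) <= lam * M by apply: Rmult_le_compat_l; lra.
    lra.
  apply: Rnot_lt_le => Hgt.
  set fs := h (F xbar) in Hgt *.
  set g := h (F xinf) - fs.
  have g0 : 0 < g by rewrite /g; lra.
  have Hq4 : 0 < g / (4 * (Rabs (M - fs) + 1)).
    apply: Rdiv_lt_0_compat => //; have := Rabs_pos (M - fs); lra.
  set lam := Rmin (1 / 2) (g / (4 * (Rabs (M - fs) + 1))).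
  have Hl : 0 < lam <= 1 / 2.
    split; [apply: Rmin_glb_lt; lra|apply: Rmin_l].
  have Hl2 : lam * (M - fs) <= g / 4.
    have L1 : lam <= g / (4 * (Rabs (M - fs) + 1)) by apply: Rmin_r.
    have E : g / (4 * (Rabs (M - fs) + 1)) * (Rabs (M - fs) + 1) = g / 4.
      by field; have := Rabs_pos (M - fs); lra.
    have := Rle_abs (M - fs); have := Rabs_pos (M - fs). nra.
  have Ht1 : 0 < lam / (CA + 1) by apply: Rdiv_lt_0_compat; lra.
  have Ht2 : 0 < g / (4 * (rho + 1)) by apply: Rdiv_lt_0_compat; lra.
  set tau := Rmin 1 (Rmin (lam / (CA + 1)) (g / (4 * (rho + 1)))).
  have Htau : 0 < tau by apply: Rmin_glb_lt; [lra|apply: Rmin_glb_lt].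
  have T1 : tau <= 1 by apply: Rmin_l.
  have T2 : tau <= lam / (CA + 1) by apply: Rle_trans (Rmin_r _ _) _; apply: Rmin_l.
  have T3 : tau <= g / (4 * (rho + 1)) by apply: Rle_trans (Rmin_r _ _) _; apply: Rmin_r.
  have [N1 HN1] := CONV tau Htau.
  have Hs : 0 < Rmin 1 (g / (8 * beta)) by apply: Rmin_glb_lt; [lra|apply: Rdiv_lt_0_compat; lra].
  have [N2 HN2] := SMALL _ Hs.
  set K := maxn N1 N2.
  have Hv := HN1 K.+1 (leqW (leq_maxl N1 N2)).
  have HG := HN2 K (leq_maxr N1 N2).
  set v := enorm (vsub (x K.+1) xinf) in Hv.
  have v0 : 0 <= v by apply: enorm_ge0.
  have Cv : CA * v <= lam.
    have E : lam / (CA + 1) * (CA + 1) = lam by field; lra.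
    nra.
  have Rv : rho / 2 * v ^ 2 <= g / 8.
    have E : g / (4 * (rho + 1)) * (rho + 1) = g / 4 by field; lra.
    have : v ^ 2 <= v by nra.
    nra.
  have Dl : del K.+1 <= g / 8.
    have [_ [H1 _]] := SF K (Ball K).
    have G1 : D K <= G K.
      rewrite /G. have P := Phi_ge1 (ltac:(have := D0 K; nra) : 0 <= c * D K).
      have Q : 1 <= (1 + r2) * Phi (c * D K) by nra.
      have := Rmult_le_compat_l (D K) _ _ (D0 K) Q.
      move=> H. have E1 : D K = D K * 1 by ring. rewrite {1}E1.
      apply: Rle_trans H _; right; ring.
    have M1 := Rmin_l 1 (g / (8 * beta)). have M2 := Rmin_r 1 (g / (8 * beta)).
    have DK1 : D K <= 1 by lra.
    have DK2 : D K <= g / (8 * beta) by lra.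
    have : D K ^ 2 <= D K by have := D0 K; nra.
    have E : beta * (g / (8 * beta)) = g / 8 by field; lra.
    nra.
  have H1 := CVX K.+1 lam Hl Cv.
  have H2 := MODk K.+1. rewrite -/v in H2.
  have E : h (F (x K.+1)) = fs + del K.+1 by rewrite /del /fs; ring.
  rewrite E in H2.
  have : (1 - lam) * h (vadd (F xinf) (mapply A (vsub (x K.+1) xinf))) <=
         (1 - lam) * (fs + del K.+1 + rho / 2 * v ^ 2) by apply: Rmult_le_compat_l; lra.
  have X0 : 0 <= lam * (del K.+1 + rho / 2 * v ^ 2).
    apply: Rmult_le_pos; [lra|]. have := del0 K.+1; have := pow2_ge_0 v; nra.
  move=> H3. rewrite /g in g0 Hl2 Rv Dl. lra.
split; first exact: CONV.
have Gk_le : forall k, G k <= (1 + r2) * (mu / beta * (c * D k)) * Phi (c * D k).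
  move=> k; rewrite /G -EDk; lra.
have PhiB : forall k, c * D k <= 1 / 4 -> Phi (c * D k) <= 1.2658.
  move=> k Hk; apply: Rle_trans P14; apply: Phi_mono; have := D0 k; nra.
case=> [|k].
  rewrite rpow_0.
  have HB : forall l, enorm (vsub (x (0 + l)%nat) (x 0%nat)) <= s 0%nat + G 1%nat.
    case=> [|l].
      rewrite add0n (@enorm_ext _ _ (fun i => 0 * x 0%nat i)); last by move=> i; rewrite /vsub; ring.
      rewrite enorm_scale Rabs_R0. have := s0 0%nat; have := G0 1%nat; lra.
    have := chain x 0 l.+1. rewrite -/s sumr_shift. have := TAIL 1%nat l. lra.
  have L := LIMB 0%nat _ HB.
  have e1 : c * D 1%nat <= 1 / 4 by have := ek 1%nat; simpl; lra.
  have c1 : 0 <= c * D 1%nat by have := D0 1%nat; nra.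
  have G1 : G 1%nat <= 2.41422 * (mu / beta * (1 / 4)) * 1.2658.
    apply: Rle_trans (Gk_le 1%nat) _.
    apply: Rmult_le_compat.
    - apply: Rmult_le_pos; [lra|apply: Rmult_le_pos; lra].
    - have := Phi_ge1 c1; lra.
    - apply: Rmult_le_compat; try lra. apply: Rmult_le_pos; lra.
      apply: Rmult_le_compat_l; lra.
    - exact: PhiB.
  have Esq : sqrt 2 * sqrt (/ 2) = 1.
    rewrite -sqrt_mult; [|lra|lra]. rewrite Rinv_r; [exact: sqrt_1|lra].
  have -> : 2 * r2 * mu / beta * sqrt (/ 2) = 2 * (mu / beta) * (sqrt 2 * sqrt (/ 2)) by rewrite /r2; field; lra.
  rewrite Esq. lra.
rewrite rpow_S.
have [[P0 P1] PE] := half_pow_bound k.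
set rk := (/2) ^ (Nat.pow 2 k) in P0 P1 PE *.
have L := LIMB k.+1 (G k.+1) (DIST k.+1).
have ek1 : c * D k.+1 <= rk ^ 2 by rewrite -PE; apply: ek.
have c1 : 0 <= c * D k.+1 by have := D0 k.+1; nra.
have e14 : c * D k.+1 <= 1 / 4 by nra.
have G1 : G k.+1 <= 2.41422 * (mu / beta * rk ^ 2) * 1.2658.
  apply: Rle_trans (Gk_le k.+1) _.
  apply: Rmult_le_compat.
  - apply: Rmult_le_pos; [lra|apply: Rmult_le_pos; lra].
  - have := Phi_ge1 c1; lra.
  - apply: Rmult_le_compat; try lra. apply: Rmult_le_pos; lra.
    apply: Rmult_le_compat_l; lra.
  - exact: PhiB.
have : mu / beta * rk ^ 2 <= mu / beta * rk * (1 / 2).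
  have -> : mu / beta * rk ^ 2 = mu / beta * rk * rk by ring.
  apply: Rmult_le_compat_l; [apply: Rmult_le_pos; lra | lra].
have : 0 <= mu / beta * rk by apply: Rmult_le_pos; lra.
have -> : 2 * r2 * mu / beta * rk = 2 * r2 * (mu / beta * rk) by field; lra.
nra.
Qed.
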